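(* Let $n\ge1$, $p$ a prime dividing $n$, and $\prec$ a degree-compatible term order on the monomials of $\mathbb{C}[x_1,\ldots,x_n]$. Then for every $0\le t\le p-1$, $$\{x^u\in D:\ \deg(x^u)<\tfrac{n(p-1)}{p}\}\subseteq\mathrm{Sm}(\prec,B_t).$$
   Context: A term order is degree-compatible if $\deg u<\deg v$ implies $u\prec v$. $\omega_1=e^{2\pi i/p}$, $\omega_j=\omega_1^j$; $B=\{1,\omega_1,\ldots,\omega_{p-1}\}^n$, $B_t=\{(t_1,\ldots,t_n)\in B: t_1\cdots t_n=\omega_t\}$. $D=\{x_1^{u_1}\cdots x_n^{u_n}: 0\le u_i\le p-1\}$. $\mathrm{Sm}(\prec,X)$ is the set of monomials that are not the $\prec$-leading monomial of any nonzero polynomial vanishing on $X$. *)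

(* Defs.v *)
From HB Require Import structures.
From mathcomp Require Import all_boot all_order all_algebra all_field.
Set Implicit Arguments. Unset Strict Implicit. Unset Printing Implicit Defensive.
Import Order.TTheory GRing.Theory Num.Theory.
Local Open Scope ring_scope.

(* Monomials x^u in n variables, represented by exponent vectors u. *)
Definition mono (n : nat) := {ffun 'I_n -> nat}.

Definition mdeg n (u : mono n) : nat := (\sum_(i < n) u i)%N.
Definition mone n : mono n := [ffun _ => 0%N].
Definition mmul n (u v : mono n) : mono n := [ffun i => (u i + v i)%N].

(* A term order on monomials: a total order, compatible with multiplication,
   with 1 as least element (hence a well-order). [le u v] means u <= v. *)
Definition term_order n (le : rel (mono n)) : Prop :=
  reflexive le /\ transitive le /\ antisymmetric le /\
  (forall u v, le u v || le v u) /\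
  (forall u, le (mone n) u) /\
  (forall u v w, le u v -> le (mmul u w) (mmul v w)).

Definition mlt n (le : rel (mono n)) (u v : mono n) : bool := le u v && (u != v).

Definition degree_compatible n (le : rel (mono n)) : Prop :=
  forall u v : mono n, (mdeg u < mdeg v)%N -> mlt le u v.

(* A polynomial in C[x_1..x_n]: coefficients on a finite list of monomials. *)
Record mpoly (R : nzRingType) (n : nat) :=
  MPoly { msupp : seq (mono n); mcoef_raw : mono n -> R }.

Definition mcoef (R : nzRingType) n (f : mpoly R n) (u : mono n) : R :=
  if u \in msupp f then mcoef_raw f u else 0.

Definition mmonoeval (R : comNzRingType) n (u : mono n) (x : 'I_n -> R) : R :=
  \prod_(i < n) x i ^+ u i.

Definition meval (R : comNzRingType) n (f : mpoly R n) (x : 'I_n -> R) : R :=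
  \sum_(u <- undup (msupp f)) mcoef f u * mmonoeval u x.

Definition mpoly_nonzero (R : nzRingType) n (f : mpoly R n) : Prop :=
  exists u, mcoef f u != 0.

Definition is_lead_mono (R : nzRingType) n (le : rel (mono n)) (f : mpoly R n)
  (u : mono n) : Prop :=
  mcoef f u != 0 /\ forall v, mcoef f v != 0 -> le v u.

Definition vanishes_on (R : comNzRingType) n (f : mpoly R n)
  (X : ('I_n -> R) -> Prop) : Prop :=
  forall x, X x -> meval f x = 0.

Definition Sm (R : comNzRingType) n (le : rel (mono n)) (X : ('I_n -> R) -> Prop)
  (u : mono n) : Prop :=
  ~ exists f : mpoly R n,
      [/\ vanishes_on f X, mpoly_nonzero f & is_lead_mono le f u].

Definition Bset (R : ringType) n p (w : R) (x : 'I_n -> R) : Prop :=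
  forall i, exists k : 'I_p, x i = w ^+ k.

Definition Btset (R : comNzRingType) n p (w : R) (t : nat) (x : 'I_n -> R) : Prop :=
  Bset p w x /\ \prod_(i < n) x i = w ^+ t.

Definition inD n p (u : mono n) : bool := [forall i, (u i <= p.-1)%N].

(* Main.v *)
Require Import Defs.
From HB Require Import structures.
From mathcomp Require Import all_boot all_order all_algebra all_field.
From mathcomp Require Import zify ring.
Set Implicit Arguments. Unset Strict Implicit.
Import Order.TTheory GRing.Theory Num.Theory.
From mathcomp Require Import zify ring.
Lemma pointwise (p c x : nat) : (x < p)%N -> (0 < c < p)%N ->
  (c * (p - c) <= c * x + (p - c) * ((x + c) %% p))%N.
Proof.
move=> hx /andP[c0 cp].
case: (ltnP (x + c) p) => h.
  rewrite modn_small //; nia.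
have -> : ((x + c) %% p = x + c - p)%N.
  rewrite -{1}(subnK h) modnDr modn_small //; lia.
nia.
Qed.

Lemma comb (n p : nat) (u v : mono n) : prime p -> (0 < n)%N -> inD p u ->
  (mdeg u * p < n * p.-1)%N -> (mdeg v <= mdeg u)%N -> v != u ->
  exists i j, (v i + p.-1 * u i) %% p != (v j + p.-1 * u j) %% p.
Proof.
move=> pp n0 uD hdeg hvu vnu.
have p0 : (0 < p)%N by exact: prime_gt0.
have uip : forall i, (u i < p)%N.
  by move=> i; move/forallP: uD => /(_ i); rewrite -ltnS prednK.
case: (boolP [exists i, exists j, (v i + p.-1 * u i) %% p != (v j + p.-1 * u j) %% p]).
  by move=> /existsP[i /existsP[j h]]; exists i, j.
rewrite negb_exists => /forallP hall.
pose i0 : 'I_n := Ordinal n0.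
pose c := ((v i0 + p.-1 * u i0) %% p)%N.
have hc : forall i, (v i %% p = (u i + c) %% p)%N.
  move=> i; have := hall i; rewrite negb_exists => /forallP /(_ i0); rewrite negbK => /eqP e.
  have -> : (v i %% p = (v i + p.-1 * u i + u i) %% p)%N.
    rewrite -addnA -{2}(mul1n (u i)) -mulnDl.
    have -> : (p.-1 + 1 = p)%N by lia.
    by rewrite addnC mulnC modnMDl.
  by rewrite -modnDml e addnC.
have cp : (c < p)%N by rewrite ltn_mod.
case: (posnP c) => [c0|cpos].
  have hv : forall i, (v i %% p = u i)%N.
    by move=> i; rewrite hc c0 addn0 modn_small.
  exfalso; move/negP: vnu; apply; apply/eqP/ffunP => i.
  have hs : (mdeg v = mdeg u + \sum_(i < n) (v i - v i %% p))%N.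
    rewrite /mdeg -big_split /=; apply: eq_bigr => j _.
    by rewrite -hv subnKC // leq_mod.
  have : (\sum_(i < n) (v i - v i %% p) == 0)%N by lia.
  rewrite sum_nat_eq0 => /forallP /(_ i) /eqP h.
  rewrite hv in h; have := leq_mod (v i) p; rewrite hv => le; by apply/eqP; rewrite eqn_leq le andbT -subn_eq0 h.
exfalso.
have hs2 : (n * (c * (p - c)) <= c * mdeg u + (p - c) * mdeg v)%N.
  have -> : (n * (c * (p - c)) = \sum_(i < n) (c * (p - c)))%N.
    by rewrite sum_nat_const card_ord.
  rewrite /mdeg !big_distrr -big_split /=; apply: leq_sum => i _.
  have := @pointwise p c (u i) (uip i); rewrite cpos cp => /(_ isT) hpw; apply: leq_trans hpw _.
  by rewrite leq_add2l -hc leq_mul2l leq_mod orbT.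
have hcp : (p.-1 <= c * (p - c))%N.
  have : ((c - 1) * (p - c - 1) >= 0)%N by [].
  nia.
nia.
Qed.

Local Open Scope ring_scope.
Definition shiftk n p (i j : 'I_n) (k : {ffun 'I_n -> 'I_p}) : {ffun 'I_n -> 'I_p} :=
  [ffun l => if l == i then ordS (k l) else if l == j then ord_pred (k l) else k l].

Lemma shiftk_inj n p (i j : 'I_n) : injective (@shiftk n p i j).
Proof.
move=> k1 k2 /ffunP e; apply/ffunP => l; have := e l; rewrite !ffunE.
case: (l == i); first exact: ordS_inj.
case: (l == j); first exact: ord_pred_inj.
by [].
Qed.

Lemma wS (R : idomainType) (p : nat) (w : R) (x : 'I_p) :
  p.-primitive_root w -> w ^+ (ordS x) = w ^+ x * w.
Proof. by move=> pw; rewrite /= (prim_expr_mod pw) exprSr. Qed.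

Lemma wP (R : idomainType) (p : nat) (w : R) (x : 'I_p) :
  p.-primitive_root w -> w ^+ (ord_pred x) = w ^+ x * w ^+ p.-1.
Proof.
move=> pw; have p0 := prim_order_gt0 pw.
rewrite /= (prim_expr_mod pw) -exprD; congr (_ ^+ _); lia.
Qed.

Lemma pow_shift (R : idomainType) n p (w : R) (i j : 'I_n) (k : {ffun 'I_n -> 'I_p})
  (a : 'I_n -> nat) : p.-primitive_root w -> i != j ->
  \prod_l (w ^+ (shiftk i j k l)) ^+ a l =
  (\prod_l (w ^+ (k l)) ^+ a l) * (w ^+ a i * (w ^+ p.-1) ^+ a j).
Proof.
move=> pw ij.
rewrite (bigD1 i) // (bigD1 j) 1?eq_sym //= [in RHS](bigD1 i) // (bigD1 j) 1?eq_sym //=.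
rewrite !ffunE eqxx eq_sym (negbTE ij) eqxx.
rewrite (wS _ pw) (wP _ pw).
rewrite (eq_bigr (fun l => (w ^+ (k l)) ^+ a l)); last first.
  by move=> l /andP[li lj]; rewrite ffunE (negbTE li) (negbTE lj).
rewrite !exprMn; ring.
Qed.

Definition Pk (R : idomainType) n p (w : R) (t : nat) (k : {ffun 'I_n -> 'I_p}) : bool :=
  \prod_l w ^+ (k l) == w ^+ t.

Definition Ssum (R : idomainType) n p (w : R) (t : nat) (a : 'I_n -> nat) : R :=
  \sum_(k : {ffun 'I_n -> 'I_p} | Pk w t k) \prod_l (w ^+ (k l)) ^+ a l.

Lemma Pk_shift (R : idomainType) n p (w : R) t (i j : 'I_n) k :
  p.-primitive_root w -> i != j -> Pk (p:=p) w t (shiftk i j k) = Pk w t k.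
Proof.
move=> pw ij; have := pow_shift k (fun _ => 1%N) pw ij.
rewrite /Pk !expr1 (eq_bigr (fun l => w ^+ (shiftk i j k l))); last by move=> l _; rewrite expr1.
rewrite (eq_bigr (fun l => w ^+ (k l)) (fun l _ => expr1 _)).
have p0 := prim_order_gt0 pw.
by rewrite -exprS prednK // (prim_expr_order pw) mulr1 => ->.
Qed.

Lemma Ssum_vanish (R : idomainType) n p (w : R) t (a : 'I_n -> nat) (i j : 'I_n) :
  p.-primitive_root w -> (a i %% p)%N != (a j %% p)%N -> Ssum p w t a = 0.
Proof.
move=> pw hij.
have ij : i != j by apply: contraNneq hij => ->.
set z := w ^+ a i * (w ^+ p.-1) ^+ a j.
have z1 : z != 1.
  apply: contra hij => /eqP hz.
  have p0 := prim_order_gt0 pw.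
  rewrite -(eq_prim_root_expr pw).
  have : z * w ^+ a j = w ^+ a i.
    by rewrite /z -mulrA -exprMn -exprSr prednK // (prim_expr_order pw) expr1n mulr1.
  by rewrite hz mul1r => ->.
have e : Ssum p w t a = Ssum p w t a * z.
  rewrite /Ssum [LHS](reindex_inj (@shiftk_inj n p i j)) /= big_distrl /=.
  apply: eq_big => k; first exact: Pk_shift.
  by move=> _; exact: pow_shift.
have : Ssum p w t a * (1 - z) = 0 by rewrite mulrBr mulr1 -e subrr.
by move/eqP; rewrite mulf_eq0 subr_eq0 (eq_sym 1 z) (negbTE z1) orbF => /eqP.
Qed.

Lemma Ssum_nz (R : numDomainType) n p (w : R) t (a : 'I_n -> nat) (i0 : 'I_n) :
  p.-primitive_root w -> (t < p)%N -> (forall l, (a l %% p = 0)%N) -> Ssum p w t a != 0.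
Proof.
move=> pw tp ha.
have p0 := prim_order_gt0 pw.
rewrite /Ssum (eq_bigr (fun _ => 1%:R)); last first.
  move=> k _; apply: big1 => l _.
  by rewrite -exprM mulnC exprM -(prim_expr_mod pw) ha expr0 expr1n.
rewrite -natr_sum pnatr_eq0 -lt0n.
pose k0 : {ffun 'I_n -> 'I_p} := [ffun l => if l == i0 then Ordinal tp else Ordinal p0].
have Pk0 : Pk w t k0.
  rewrite /Pk (bigD1 i0) //= big1 ?mulr1 ?ffunE ?eqxx //.
  by move=> l /negbTE li; rewrite ffunE li.
by rewrite (bigD1 k0) //.
Qed.

Theorem mainTheorem9 (C : numClosedFieldType) (n p : nat) (w : C)
  (le : rel (mono n)) :
  (1 <= n)%N -> prime p -> (p %| n)%N ->
  p.-primitive_root w ->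
  term_order le -> degree_compatible le ->
  forall t : nat, (t <= p.-1)%N ->
  forall u : mono n,
    inD p u -> ((mdeg u)%:R < (n * p.-1)%:R / p%:R :> rat) ->
    Sm le (Btset p w t) u.
Proof.
move=> n1 pp _ pw [_ [_ [anti _]]] dc t tp u uD hdeg [f [van _ [cu lead]]].
have p0 := prime_gt0 pp.
have tp' : (t < p)%N by rewrite -(prednK p0) ltnS.
have hdegN : (mdeg u * p < n * p.-1)%N.
  by move: hdeg; rewrite ltr_pdivlMr ?ltr0n // -natrM ltr_nat.
have degb : forall v, mcoef f v != 0 -> (mdeg v <= mdeg u)%N.
  move=> v cv; rewrite leqNgt; apply/negP => h.
  have := dc _ _ h; rewrite /mlt => /andP[luv nuv].
  by move: nuv; rewrite (anti u v) ?eqxx // luv lead.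
pose pt (k : {ffun 'I_n -> 'I_p}) := fun l => w ^+ (k l).
have inB : forall k, Pk w t k -> Btset p w t (pt k).
  by move=> k hk; split; [move=> l; exists (k l) | exact/eqP].
pose M (k : {ffun 'I_n -> 'I_p}) := \prod_l (w ^+ (k l)) ^+ (p.-1 * u l).
have T0 : \sum_(k | Pk w t k) meval f (pt k) * M k = 0.
  by apply: big1 => k hk; rewrite van ?mul0r //; exact: inB.
have T1 : \sum_(k | Pk w t k) meval f (pt k) * M k =
    \sum_(v <- undup (msupp f)) mcoef f v * Ssum p w t (fun l => v l + p.-1 * u l)%N.
  rewrite /meval; under eq_bigr do rewrite big_distrl.
  rewrite exchange_big; apply: eq_bigr => v _.
  rewrite /Ssum big_distrr; apply: eq_bigr => k _.
  rewrite /= -mulrA /mmonoeval /M -big_split; congr (_ * _).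
  by apply: eq_bigr => l _; rewrite exprD.
have uin : u \in undup (msupp f).
  by rewrite mem_undup; move: cu; rewrite /mcoef; case: ifP => //; rewrite eqxx.
rewrite T1 (bigD1_seq u) ?undup_uniq //= big1_seq ?addr0 in T0; last first.
  move=> v /andP[vu vin]; case: (eqVneq (mcoef f v) 0) => [->|cv]; first by rewrite mul0r.
  have [i [j hij]] := comb pp n1 uD hdegN (degb v cv) vu.
  by rewrite (@Ssum_vanish _ _ p w t _ i j pw hij) mulr0.
move/eqP: T0; rewrite mulf_eq0 (negbTE cu) /=.
apply/negP; apply: (@Ssum_nz _ _ p w t _ (Ordinal n1) pw tp') => l.
by rewrite -{1}(mul1n (u l)) -mulnDl add1n prednK // mulnC modnMl.
Qed.
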